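(* Let $0\le\alpha<2\pi$, $0\le\beta<\pi/2$, and let $\{a_k\}_{k\in\mathbb Z}$ be a sequence of complex numbers with $a_k=0$ for all $k\le0$, such that $\{a_k\}_{k\ge1}\in\mathrm{GM}$ and $a_k\in S_{\alpha,\beta}$ for all $k\ge1$. Then $\{a_k\}_{k\in\mathbb Z}\in\overline{\mathrm{GM}}$.
   Context: $S_{\alpha,\beta}=\{z\in\mathbb C: z=0\text{ or }|\arg z-\alpha|\le\beta\}$. A sequence $\{a_k\}_{k\ge1}$ belongs to $\mathrm{GM}$ if there exist $C>0$ and $\lambda>1$ such that for every $n\ge1$, $\sum_{k=n}^{2n}|a_k-a_{k+1}|\le\frac Cn\sum_{n/\lambda\le k\le\lambda n}|a_k|$. For a two-sided sequence $a$: $|\Delta a_k|=|a_k-a_{k+1}|$ for $k>0$, $|\Delta a_k|=|a_k-a_{k-1}|$ for $k<0$, $|\Delta a_0|=|a_0-a_1|+|a_0-a_{-1}|$; for $k\ge0$, $\widehat a_{2^k}=\sup_{2^k\le|m|<2^{k+1}}\frac1{|m|+1}|\sum_{j=0}^ma_j|$, where for $m<0$, $\sum_{j=0}^ma_j$ means $\sum_{j=m}^0a_j$; $[\cdot]$ is the floor function. The sequence $a$ belongs to $\overline{\mathrm{GM}}$ if there is $C'>0$ such that for every $n\ge0$, $\sum_{[2^{n-1}]\le|m|<2^n}|\Delta a_m|\le C'\sup_{k\in\mathbb N_0}\min(1,2^{k-n})\widehat a_{2^k}$. *)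

(* Defs.v *)
From Stdlib Require Import Reals ZArith Lra Lia.
From Coquelicot Require Import Coquelicot.
Open Scope R_scope.

Definition sector (alpha beta : R) (z : C) : Prop :=
  z = RtoC 0 \/
  exists r theta : R, 0 < r /\ Rabs (theta - alpha) <= beta /\
    z = (r * cos theta, r * sin theta).

Fixpoint sumC (f : nat -> C) (N : nat) : C :=
  match N with
  | O => f O
  | S n => Cplus (sumC f n) (f (S n))
  end.

Fixpoint maxR (f : nat -> R) (N : nat) : R :=
  match N with
  | O => f O
  | S n => Rmax (maxR f n) (f (S n))
  end.

(* The class GM, for a one-sided sequence b indexed by k >= 1 (b 0 is unused). *)
Definition isGM (b : nat -> C) : Prop :=
  exists (Cst lam : R), 0 < Cst /\ 1 < lam /\
    forall n : nat, (1 <= n)%nat ->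
      sum_f_R0 (fun i => Cmod (Cminus (b (n + i)%nat) (b (n + i + 1)%nat))) n
      <= Cst / INR n *
         sum_f_R0 (fun k => if Rle_dec (INR n / lam) (INR k)
                            then if Rle_dec (INR k) (lam * INR n)
                                 then Cmod (b k) else 0
                            else 0)
                  (Z.to_nat (up (lam * INR n))).

Definition Delta (a : Z -> C) (k : Z) : R :=
  if Z.ltb 0 k then Cmod (Cminus (a k) (a (k + 1)%Z))
  else if Z.ltb k 0 then Cmod (Cminus (a k) (a (k - 1)%Z))
  else Cmod (Cminus (a 0%Z) (a 1%Z)) + Cmod (Cminus (a 0%Z) (a (-1)%Z)).

(* sum_{j=0}^m a_j, with the convention sum_{j=m}^0 a_j for m < 0 *)
Definition psum (a : Z -> C) (m : Z) : C :=
  if Z.leb 0 m then sumC (fun i => a (Z.of_nat i)) (Z.to_nat m)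
  else sumC (fun i => a (m + Z.of_nat i)%Z) (Z.to_nat (- m)).

Definition hat_term (a : Z -> C) (m : Z) : R :=
  Cmod (psum a m) / (IZR (Z.abs m) + 1).

(* hat a_{2^k} = sup_{2^k <= |m| < 2^{k+1}} |sum_{j=0}^m a_j| / (|m|+1)
   (a maximum over a finite nonempty set) *)
Definition hat (a : Z -> C) (k : nat) : R :=
  maxR (fun i => Rmax (hat_term a (2 ^ Z.of_nat k + Z.of_nat i)%Z)
                      (hat_term a (- (2 ^ Z.of_nat k + Z.of_nat i))%Z))
       (Z.to_nat (2 ^ Z.of_nat k - 1)).

(* sum of |Delta a_m| over [2^{n-1}] <= |m| < 2^n *)
Definition block_sum (a : Z -> C) (n : nat) : R :=
  let N := (2 ^ Z.of_nat n - 1)%Z in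
  let lo := ((2 ^ Z.of_nat n) / 2)%Z in
  sum_f_R0 (fun i => let m := (- N + Z.of_nat i)%Z in
                     if Z.leb lo (Z.abs m) then Delta a m else 0)
           (Z.to_nat (2 * N)).

(* The class bar GM; the supremum over k is taken in the extended reals. *)
Definition barGM (a : Z -> C) : Prop :=
  exists Cst : R, 0 < Cst /\
    forall n : nat,
      Rbar_le (Finite (block_sum a n))
        (Rbar_mult (Finite Cst)
           (Lub_Rbar (fun x => exists k : nat,
              x = Rmin 1 (powerRZ 2 (Z.of_nat k - Z.of_nat n)) * hat a k))).

(* Main.v *)
Require Import Defs.
From Stdlib Require Import Reals ZArith Lra Lia.
From Coquelicot Require Import Coquelicot.
Open Scope R_scope.

Definition proj (al : R) (z : C) : R := cos al * fst z + sin al * snd z.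

Lemma proj_le_Cmod al z : proj al z <= Cmod z.
Proof.
  unfold proj. destruct z as [x y]. simpl.
  assert (Hs := Cmod_ge_0 (x,y)).
  assert (Hsq : Cmod (x,y) * Cmod (x,y) = x^2 + y^2).
  { unfold Cmod. apply sqrt_sqrt. simpl; nra. }
  assert (Hc := sin2_cos2 al). unfold Rsqr in Hc.
  set (p := cos al * x + sin al * y). set (s := Cmod (x,y)) in *.
  assert (Hp : p * p <= s * s).
  { rewrite Hsq. unfold p. pose proof (pow2_ge_0 (cos al * y - sin al * x)). nra. }
  destruct (Rle_dec p 0); [lra|]. nra.
Qed.

Lemma sector_proj al be z : 0 <= be < PI/2 -> sector al be z ->
  cos be * Cmod z <= proj al z.
Proof.
  intros Hb [->|[r [th [Hr [Hth ->]]]]].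
  - rewrite Cmod_0. unfold proj, RtoC; simpl. lra.
  - assert (Hm : Cmod (r * cos th, r * sin th) = r).
    { unfold Cmod; cbn [fst snd].
      replace ((r * cos th) ^ 2 + (r * sin th) ^ 2) with (r^2 * (sin th ^2 + cos th ^2)) by ring.
      assert (Hc := sin2_cos2 th). unfold Rsqr in Hc. 
      replace (sin th ^2 + cos th ^2) with 1 by lra.
      rewrite Rmult_1_r. apply sqrt_pow2. lra. }
    rewrite Hm. unfold proj; simpl.
    replace (cos al * (r * cos th) + sin al * (r * sin th)) with (r * cos (th - al))
      by (rewrite cos_minus; ring).
    assert (cos be <= cos (th - al)).
    { replace (cos (th - al)) with (cos (Rabs (th - al))).
      2:{ unfold Rabs; destruct (Rcase_abs (th - al)); [apply cos_neg|reflexivity]. }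
      pose proof PI_RGT_0. pose proof (Rabs_pos (th - al)). apply cos_decr_1; lra. }
    nra.
Qed.

Lemma proj_plus al z w : proj al (Cplus z w) = proj al z + proj al w.
Proof. unfold proj; destruct z, w; simpl; ring. Qed.

Lemma proj_sumC al f M : proj al (sumC f M) = sum_f_R0 (fun i => proj al (f i)) M.
Proof. induction M; simpl; [reflexivity| rewrite proj_plus, IHM; reflexivity]. Qed.

Lemma sum_sector al be f M : 0 <= be < PI/2 ->
  (forall i, (i <= M)%nat -> sector al be (f i)) ->
  cos be * sum_f_R0 (fun i => Cmod (f i)) M <= Cmod (sumC f M).
Proof.
  intros Hb Hs. eapply Rle_trans; [| apply (proj_le_Cmod al)].
  rewrite proj_sumC, scal_sum. apply sum_Rle. intros i Hi.
  rewrite Rmult_comm. apply sector_proj; auto.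
Qed.

Lemma maxR_ge f N i : (i <= N)%nat -> f i <= maxR f N.
Proof.
  induction N; intros Hi.
  - replace i with 0%nat by lia. simpl; lra.
  - simpl. destruct (Nat.eq_dec i (S N)) as [->|].
    + apply Rmax_r.
    + eapply Rle_trans; [apply IHN; lia| apply Rmax_l].
Qed.

Lemma hat_term_ge0 a m : 0 <= hat_term a m.
Proof.
  unfold hat_term. apply Rdiv_le_0_compat. apply Cmod_ge_0.
  assert (0 <= IZR (Z.abs m)) by (apply IZR_le; lia). lra.
Qed.

Lemma hat_ge (a : Z -> C) (M : nat) : (1 <= M)%nat ->
  exists k, (2 ^ k <= M < 2 ^ S k)%nat /\ hat_term a (Z.of_nat M) <= hat a k.
Proof.
  intros HM. exists (Nat.log2 M). pose proof (Nat.log2_spec M ltac:(lia)) as Hs.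
  split; [exact Hs|]. set (k := Nat.log2 M) in *.
  unfold hat.
  assert (Hp : (2 ^ Z.of_nat k)%Z = Z.of_nat (2 ^ k)) by (rewrite Nat2Z.inj_pow; reflexivity).
  rewrite Hp.
  eapply Rle_trans; [| apply (maxR_ge _ _ (M - 2^k)%nat)].
  - simpl. replace (Z.of_nat (2 ^ k) + Z.of_nat (M - 2 ^ k))%Z with (Z.of_nat M) by lia.
    apply Rmax_l.
  - simpl in Hs. lia.
Qed.

Lemma close (E : R -> Prop) bs Cst : 0 < Cst -> (exists e, E e /\ bs <= Cst * e) ->
  Rbar_le (Finite bs) (Rbar_mult (Finite Cst) (Lub_Rbar E)).
Proof.
  intros HC [e [He Hb]].
  destruct (Lub_Rbar_correct E) as [Hub _].
  specialize (Hub e He).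
  destruct (Lub_Rbar E) as [l| |]; simpl in *.
  - nra.
  - unfold Rbar_mult, Rbar_mult'. destruct (Rle_dec 0 Cst) as [r|r]; [|lra].
    destruct (Rle_lt_or_eq_dec 0 Cst r); [simpl; auto|lra].
  - contradiction.
Qed.

Lemma half_le z : (-1 <= z)%Z -> 1/2 <= Rmin 1 (powerRZ 2 z).
Proof.
  intros Hz. apply Rmin_glb; [lra|].
  destruct z as [|p|p]; simpl.
  - lra.
  - pose proof (pow_R1_Rle 2 (Pos.to_nat p) ltac:(lra)). lra.
  - assert (p = 1%positive) by lia. subst. simpl. lra.
Qed.

Lemma Delta_neg a m : (forall k, (k <= 0)%Z -> a k = RtoC 0) -> (m < 0)%Z -> Defs.Delta a m = 0.
Proof.
  intros H0 Hm. unfold Defs.Delta.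
  replace (Z.ltb 0 m) with false by (symmetry; apply Z.ltb_ge; lia).
  replace (Z.ltb m 0) with true by (symmetry; apply Z.ltb_lt; lia).
  rewrite !H0 by lia. unfold Cminus. rewrite Cplus_opp_r. apply Cmod_0.
Qed.

Lemma block_bound a n' : (forall k, (k <= 0)%Z -> a k = RtoC 0) ->
  block_sum a (S n') <= sum_f_R0 (fun i => Cmod (Cminus (a (Z.of_nat (2^n' + i)))
                              (a (Z.of_nat (2^n' + i + 1))))) (2^n').
Proof.
  intros H0. unfold block_sum. cbv zeta.
  set (P := (2 ^ n')%nat).
  assert (HP : (1 <= P)%nat) by (unfold P; apply Nat.le_succ_l, Nat.neq_0_lt_0, Nat.pow_nonzero; lia).
  assert (E2 : (2 ^ Z.of_nat (S n'))%Z = Z.of_nat (2 * P)).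
  { unfold P. rewrite <- Nat.pow_succ_r'. rewrite Nat2Z.inj_pow. reflexivity. }
  rewrite E2.
  replace (Z.to_nat (2 * (Z.of_nat (2 * P) - 1))) with (4 * P - 2)%nat by lia.
  replace (Z.of_nat (2 * P) / 2)%Z with (Z.of_nat P)
    by (apply Z.div_unique_exact; lia).
  rewrite (tech2 _ (3 * P - 2) (4 * P - 2)) by lia.
  rewrite sum_eq_R0.
  2:{ intros i Hi.
      destruct (Z.ltb_spec (- (Z.of_nat (2 * P) - 1) + Z.of_nat i) 0).
      - destruct (Z.leb _ _); [apply Delta_neg; auto| reflexivity].
      - replace (Z.leb _ _) with false; [reflexivity|]. symmetry. apply Z.leb_gt. lia. }
  rewrite Rplus_0_l.
  replace (4 * P - 2 - S (3 * P - 2))%nat with (P - 1)%nat by lia.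
  set (g := fun i : nat => Cmod (a (Z.of_nat (P + i)) - a (Z.of_nat (P + i + 1)))).
  assert (Eg : sum_f_R0 g P = sum_f_R0 g (P - 1) + g P).
  { replace P with (S (P - 1)) at 1 by lia. simpl. f_equal. f_equal. lia. }
  rewrite Eg. assert (0 <= g P) by apply Cmod_ge_0.
  apply Rle_trans with (sum_f_R0 g (P - 1)); [|lra].
  right. apply sum_eq. intros j Hj.
  replace (- (Z.of_nat (2 * P) - 1) + Z.of_nat (S (3 * P - 2) + j))%Z with (Z.of_nat (P + j)) by lia.
  replace (Z.leb (Z.of_nat P) (Z.abs (Z.of_nat (P + j)))) with true by (symmetry; apply Z.leb_le; lia).
  unfold Defs.Delta.
  replace (Z.ltb 0 (Z.of_nat (P + j))) with true by (symmetry; apply Z.ltb_lt; lia).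
  unfold g. f_equal. f_equal. f_equal. lia.
Qed.
Theorem mainTheorem13 (alpha beta : R) (a : Z -> C) :
  0 <= alpha < 2 * PI ->
  0 <= beta < PI / 2 ->
  (forall k : Z, (k <= 0)%Z -> a k = RtoC 0) ->
  isGM (fun k : nat => a (Z.of_nat k)) ->
  (forall k : nat, (1 <= k)%nat -> sector alpha beta (a (Z.of_nat k))) ->
  barGM a.
Proof.
  intros Ha Hb H0 [C [lam [HC [Hl HG]]]] Hsec.
  assert (Hcb : 0 < cos beta) by (apply cos_gt_0; pose proof PI_RGT_0; lra).
  set (K1 := C * (lam + 1) / cos beta).
  assert (HK1 : 0 < K1) by (unfold K1; apply Rdiv_lt_0_compat; nra).
  exists (Rmax 2 (2 * K1)). split; [pose proof (Rmax_l 2 (2*K1)); lra|].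
  intros n. apply close; [pose proof (Rmax_l 2 (2*K1)); lra|].
  destruct n as [|n'].
  -
    exists (Rmin 1 (powerRZ 2 (Z.of_nat 0 - Z.of_nat 0)) * hat a 0).
    split; [exists 0%nat; reflexivity|].
    simpl powerRZ. rewrite Rmin_left by lra. rewrite Rmult_1_l.
    assert (Hbs : block_sum a 0 = 2 * hat_term a 1).
    { unfold block_sum, hat_term, psum. simpl. unfold Defs.Delta. simpl.
      rewrite (H0 0%Z), (H0 (-1)%Z) by lia.
      replace (Cminus (RtoC 0) (RtoC 0)) with (RtoC 0) by (unfold Cminus; rewrite Cplus_opp_r; reflexivity).
      rewrite Cmod_0, Cplus_0_l. unfold Cminus. rewrite Cplus_0_l, Cmod_opp. field. }
    assert (Hh : hat_term a 1 <= hat a 0).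
    { unfold hat. simpl. apply Rmax_l. }
    pose proof (hat_term_ge0 a 1). pose proof (Rmax_l 2 (2*K1)). rewrite Hbs. nra.
  - set (P := (2 ^ n')%nat).
    assert (HP : (1 <= P)%nat) by (unfold P; apply Nat.le_succ_l, Nat.neq_0_lt_0, Nat.pow_nonzero; lia).
    assert (HPr : 1 <= INR P) by (apply (le_INR 1); exact HP).
    specialize (HG P HP).
    set (U := Z.to_nat (up (lam * INR P))) in HG.
    destruct (archimed (lam * INR P)) as [Hu1 Hu2].
    assert (HUr : INR U = IZR (up (lam * INR P))).
    { unfold U. rewrite INR_IZR_INZ, Z2Nat.id; [reflexivity|].
      apply le_IZR. nra. }
    assert (HU1 : (1 <= U)%nat) by (apply INR_le; simpl; nra).
    set (M := (U - 1)%nat).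
    assert (HMr : INR M = INR U - 1) by (unfold M; rewrite minus_INR by lia; simpl; lra).
    assert (HMP : (P <= M)%nat).
    { apply INR_le. assert (INR P < INR M + 1) by nra.
      assert (HPM : (P < M + 1)%nat) by (apply INR_lt; rewrite plus_INR; simpl; lra). apply le_INR. lia. }
    assert (HM1 : (1 <= M)%nat) by lia.
    set (b := fun k : nat => a (Z.of_nat k)).
    assert (Hsum : sum_f_R0 (fun k => if Rle_dec (INR P / lam) (INR k)
                            then if Rle_dec (INR k) (lam * INR P)
                                 then Cmod (a (Z.of_nat k)) else 0
                            else 0) U <= sum_f_R0 (fun k => Cmod (b k)) M).
    { replace U with (S M) by (unfold M; lia). rewrite tech5.
      replace (INR (S M)) with (INR U) by (f_equal; unfold M; lia).
      destruct (Rle_dec (INR P / lam) (INR U)); [destruct (Rle_dec (INR U) (lam * INR P)); [lra|]|].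
      all: rewrite Rplus_0_r; apply sum_Rle; intros k _.
      all: destruct (Rle_dec _ _); try destruct (Rle_dec _ _); try apply Rle_refl; apply Cmod_ge_0. }
    assert (Hsec2 : cos beta * sum_f_R0 (fun k => Cmod (b k)) M <= Cmod (sumC b M)).
    { apply (sum_sector alpha). exact Hb. intros i _. destruct i as [|i].
      - left. unfold b. apply H0. lia.
      - apply Hsec. lia. }
    assert (Hht : Cmod (sumC b M) = (INR M + 1) * hat_term a (Z.of_nat M)).
    { unfold hat_term, psum.
      replace (Z.leb 0 (Z.of_nat M)) with true by (symmetry; apply Z.leb_le; lia).
      rewrite Nat2Z.id. replace (Z.abs (Z.of_nat M)) with (Z.of_nat M) by lia.
      rewrite <- INR_IZR_INZ. fold b. field. pose proof (pos_INR M). lra. }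
    destruct (hat_ge a M HM1) as [k [Hk Hhk]].
    exists (Rmin 1 (powerRZ 2 (Z.of_nat k - Z.of_nat (S n'))) * hat a k).
    split; [exists k; reflexivity|].
    assert (Hnk : (n' <= k)%nat).
    { assert (P < 2 ^ S k)%nat by lia. unfold P in H.
      apply Nat.pow_lt_mono_r_iff in H; lia. }
    assert (Hmin := half_le (Z.of_nat k - Z.of_nat (S n')) ltac:(lia)).
    pose proof (block_bound a n' H0) as Hbb. fold P in Hbb. fold b in Hbb.
    change (fun i : nat => Cmod (Cminus (b (P + i)%nat) (b (P + i + 1)%nat))) with
      (fun i : nat => Cmod (Cminus (b (P + i)%nat) (b (P + i + 1)%nat))) in HG.
    set (h := hat_term a (Z.of_nat M)) in *.
    assert (Hh0 : 0 <= h) by apply hat_term_ge0.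
    assert (HB1 : block_sum a (S n') <= C / INR P * ((INR M + 1) * h / cos beta)).
    { eapply Rle_trans; [exact Hbb|]. eapply Rle_trans; [exact HG|].
      apply Rmult_le_compat_l. apply Rdiv_le_0_compat; lra.
      eapply Rle_trans; [exact Hsum|]. rewrite <- Hht.
      apply (Rmult_le_reg_l (cos beta)); auto. field_simplify; lra. }
    assert (HB2 : C / INR P * ((INR M + 1) * h / cos beta) <= K1 * h).
    { unfold K1. replace (C / INR P * ((INR M + 1) * h / cos beta)) with
        ((C * h / cos beta) * ((INR M + 1) / INR P)) by (field; lra).
      replace (C * (lam + 1) / cos beta * h) with ((C * h / cos beta) * (lam + 1)) by (field; lra).
      apply Rmult_le_compat_l. apply Rdiv_le_0_compat; nra.
      apply (Rmult_le_reg_r (INR P)); [lra|]. field_simplify; nra. }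
    pose proof (Rmax_r 2 (2*K1)).
    assert (0 <= hat a k) by lra.
    set (mm := Rmin 1 _) in *.
    assert (mm <= 1) by (unfold mm; apply Rmin_l).
    assert (S1 : block_sum a (S n') <= K1 * hat a k).
    { apply Rle_trans with (K1 * h); [lra|]. apply Rmult_le_compat_l; [lra|]. exact Hhk. }
    assert (Hm2 : 1/2 <= mm) by exact Hmin.
    assert (S2 : K1 * hat a k <= (2 * K1) * (mm * hat a k)).
    { pose proof (Rmult_le_pos (K1 * hat a k) (2 * mm - 1) ltac:(nra) ltac:(lra)). nra. }
    assert (S3 : (2 * K1) * (mm * hat a k) <= Rmax 2 (2 * K1) * (mm * hat a k)).
    { apply Rmult_le_compat_r; [|lra]. apply Rmult_le_pos; lra. }
    lra.
Qed.
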